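(* Let $A$ be a circular $m\times n$ matrix, $b\in\mathbb{Z}_+^m$, and let $\Gamma$ be a circuit in $D(A)$ with $p(\Gamma)>0$. Then the $\Gamma$-inequality $\sum_{j\in[n]}[p^-(\Gamma,j)+r(\Gamma,b)]x_j\ge r(\Gamma,b)(\beta(\Gamma,b)+1)+\sum_{i\in[m]:\bar a_i\in E(\Gamma)}b_i$ is valid for $Q^*(A,b)$.
   Context: Notation: $[n]=\{1,\dots,n\}$ with addition mod $n$ (index $0$ identified with $n$); for $a,c\in[n]$ with $t\ge0$ minimal such that $a+t\equiv c\pmod n$, $[a,c)_n=\{a,\dots,a+t-1\}$ (mod $n$). An $m\times n$ $\{0,1\}$-matrix $A$ is circular if for each row $i$ there are $\ell_i\in[n]$ and an integer $2\le k_i\le n-1$ such that row $i$ is the incidence vector of $[\ell_i,\ell_i+k_i)_n$. $Q(A,b)=\{x\in\mathbb{R}^n:Ax\ge b,x\ge0\}$, $Q^*(A,b)=\operatorname{conv}(Q(A,b)\cap\mathbb{Z}^n)$. $D(A)$: node set $[n]$ (labels mod $n$); forward row arcs $a_i=(\ell_i-1,\ell_i+k_i-1)$ ($i\in[m]$), forward short arcs $a_{m+j}=(j-1,j)$ ($j\in[n]$), reverse row arcs $\bar a_i=(\ell_i+k_i-1,\ell_i-1)$, reverse short arcs $\bar a_{m+j}=(j,j-1)$; lengths $k_i$, $1$, $-k_i$, $-1$ respectively. A circuit is a simple directed circuit; its winding number $p(\Gamma)$ satisfies $p(\Gamma)n=\sum_{a\in E(\Gamma)}l(a)$. A forward row arc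 $a_i$ jumps over $j$ iff $j\in[\ell_i,\ell_i+k_i)_n$; $(j-1,j)$ jumps over $j$ only; a reverse arc $\bar a_k$ jumps over $j$ iff $a_k$ does. $p^-(\Gamma,j)$ = number of reverse arcs of $\Gamma$ jumping over $j$. $t(\Gamma,b)=\sum_{i:a_i\in E(\Gamma)}b_i-\sum_{i:\bar a_i\in E(\Gamma)}b_i$, $\beta(\Gamma,b)=\lfloor t(\Gamma,b)/p(\Gamma)\rfloor$, $r(\Gamma,b)=t(\Gamma,b)-\beta(\Gamma,b)p(\Gamma)$. *)

(* Defs.v *)
From mathcomp Require Import all_boot all_order all_algebra.
From mathcomp Require Import reals.
Set Implicit Arguments. Unset Strict Implicit. Unset Printing Implicit Defensive.
Import Order.TTheory GRing.Theory Num.Theory.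
Local Open Scope ring_scope.

(* Conventions (0-based):
   - node labels of D(A) are residues mod n, represented by nat in {0..n-1}
     (the paper's node n is node 0);
   - column / variable index c : 'I_n stands for the paper's j = c+1;
   - l0 i : 'I_n stands for the paper's ell_i - 1, k i for k_i. *)

Section Circ.
Variables (m n : nat) (l0 : 'I_m -> 'I_n) (k : 'I_m -> nat).

(* Row i of a circular matrix: incidence vector of [ell_i, ell_i + k_i)_n,
   i.e. column j=c+1 belongs to it iff (j - ell_i) mod n < k_i. *)
Definition circ_inc (i : 'I_m) (c : 'I_n) : bool :=
  ((c + n - l0 i) %% n < k i)%N.

(* Arcs of D(A): (inl i, false) = a_i, (inr c, false) = a_{m+(c+1)},
   (inl i, true) = reverse arc of a_i, (inr c, true) = reverse of a_{m+(c+1)}. *)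
Definition darc := (('I_m + 'I_n) * bool)%type.

Definition base_tail (s : 'I_m + 'I_n) : nat :=
  match s with inl i => nat_of_ord (l0 i) | inr c => nat_of_ord c end.
Definition base_len (s : 'I_m + 'I_n) : nat :=
  match s with inl i => k i | inr _ => 1%N end.

Definition arc_tail (e : darc) : nat :=
  if e.2 then ((base_tail e.1 + base_len e.1) %% n)%N else base_tail e.1.
Definition arc_head (e : darc) : nat :=
  if e.2 then base_tail e.1 else ((base_tail e.1 + base_len e.1) %% n)%N.
Definition arc_len (e : darc) : int :=
  if e.2 then - (base_len e.1)%:Z else (base_len e.1)%:Z.

Definition jumps (e : darc) (c : 'I_n) : bool :=
  ((c + n - base_tail e.1) %% n < base_len e.1)%N.

Definition is_circuit (g : seq darc) : bool :=
  [&& g != [::], uniq (map arc_tail g)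
    & cycle (fun e f : darc => arc_head e == arc_tail f) g].

Definition winding (g : seq darc) : int :=
  ((\sum_(e <- g) arc_len e) %/ (n%:Z))%Z.

Variable b : 'I_m -> int.

Definition row_b (e : darc) : int :=
  match e.1 with inl i => if e.2 then - b i else b i | inr _ => 0 end.

Definition tval (g : seq darc) : int := \sum_(e <- g) row_b e.
Definition betav (g : seq darc) : int := ((tval g) %/ (winding g))%Z.
Definition rval (g : seq darc) : int := tval g - betav g * winding g.

Definition pminus (g : seq darc) (c : 'I_n) : nat :=
  count (fun e : darc => e.2 && jumps e c) g.

Definition rev_row_bsum (g : seq darc) : int :=
  \sum_(e <- g | e.2) match e.1 with inl i => b i | inr _ => 0 end.

End Circ.

Section Poly.
Variables (R : realType) (m n : nat).

Definition Qset (A : 'M[R]_(m, n)) (b : 'I_m -> int) (x : 'I_n -> R) : Prop :=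
  (forall i : 'I_m, (b i)%:~R <= \sum_(j < n) A i j * x j) /\
  (forall j : 'I_n, 0 <= x j).

Definition integral_vec (x : 'I_n -> R) : Prop :=
  exists z : 'I_n -> int, forall j, x j = (z j)%:~R.

Definition conv_hull (S : ('I_n -> R) -> Prop) (x : 'I_n -> R) : Prop :=
  exists (q : nat) (lam : 'I_q -> R) (pts : 'I_q -> ('I_n -> R)),
    [/\ forall t, 0 <= lam t, \sum_(t < q) lam t = 1, forall t, S (pts t)
      & forall j, x j = \sum_(t < q) lam t * pts t j].

Definition Qstar (A : 'M[R]_(m, n)) (b : 'I_m -> int) : ('I_n -> R) -> Prop :=
  conv_hull (fun y => Qset A b y /\ integral_vec y).

End Poly.

(* Main.v *)
Require Import Defs.
From mathcomp Require Import all_boot all_order all_algebra.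
From mathcomp Require Import reals.
From mathcomp Require Import zify ring lra.
Set Implicit Arguments. Unset Strict Implicit. Unset Printing Implicit Defensive.
Import Order.TTheory GRing.Theory Num.Theory.
Local Open Scope ring_scope.

Definition ind (P : bool) : int := if P then 1 else 0.

Lemma modn_big (a n : nat) : (n <= a)%N -> (a < n + n)%N -> (a %% n = a - n)%N.
Proof.
move=> h1 h2; rewrite -{1}(subnK h1) modnDr modn_small //; lia.
Qed.

Section Comb.
Variables (m n : nat) (l0 : 'I_m -> 'I_n) (k : 'I_m -> nat).

Definition wr (e : darc m n) : int :=
  (if e.2 then -1 else 1) * ind (n <= base_tail l0 e.1 + base_len k e.1)%N.
Definition sj (e : darc m n) (c : 'I_n) : int :=
  if e.2 then - ind (jumps l0 k e c) else ind (jumps l0 k e c).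

Lemma F1 (e : darc m n) : (base_tail l0 e.1 < n)%N -> (base_len k e.1 <= n)%N ->
  arc_len k e = (arc_head l0 k e)%:Z - (arc_tail l0 k e)%:Z + n%:Z * wr e.
Proof.
case: e => s d /=; rewrite /arc_len /arc_head /arc_tail /wr /ind /=.
move: (base_tail l0 s) (base_len k s) => T L hT hL.
case: (leqP n (T + L)) => h.
  rewrite modn_big //; last lia.
  case: d; lia.
rewrite modn_small //; case: d; lia.
Qed.

Lemma F2 (e : darc m n) (c : 'I_n) : (base_tail l0 e.1 < n)%N -> (base_len k e.1 <= n)%N ->
  sj e c = wr e - ind (arc_head l0 k e <= c)%N + ind (arc_tail l0 k e <= c)%N.
Proof.
case: e => s d /=; rewrite /sj /jumps /arc_head /arc_tail /wr /ind /=.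
move: (base_tail l0 s) (base_len k s) => T L hT hL.
have hc := ltn_ord c.
have E1 : ((c + n - T) %% n = if (T <= c)%N then c - T else c + n - T)%N.
  case: (leqP T c) => h.
    rewrite modn_big; lia.
  rewrite modn_small; lia.
rewrite E1.
case: (leqP n (T + L)) => h.
  rewrite modn_big //; last lia.
  case: (leqP T c) => h2; case: d => /=;
  repeat (case: ifP => /=); lia.
rewrite modn_small //.
case: (leqP T c) => h2; case: d => /=;
repeat (case: ifP => /=); lia.
Qed.

Lemma telesc (F : nat -> int) (x : darc m n) (s : seq (darc m n)) :
  path (fun e f : darc m n => arc_head l0 k e == arc_tail l0 k f) x s ->
  \sum_(e <- x :: s) (F (arc_tail l0 k e) - F (arc_head l0 k e)) =
  F (arc_tail l0 k x) - F (arc_head l0 k (last x s)).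
Proof.
elim: s x => [|y s IH] x /=.
  by rewrite big_cons big_nil addr0.
move=> /andP [/eqP hxy hp].
rewrite big_cons IH // hxy /=.
rewrite addrA subrK //.
Qed.

Lemma telesc_cycle (F : nat -> int) (g : seq (darc m n)) :
  cycle (fun e f : darc m n => arc_head l0 k e == arc_tail l0 k f) g ->
  \sum_(e <- g) (F (arc_tail l0 k e) - F (arc_head l0 k e)) = 0.
Proof.
case: g => [|x s]; first by rewrite big_nil.
rewrite /= rcons_path => /andP [hp /eqP hl].
by rewrite telesc // hl subrr.
Qed.

Hypothesis hk : forall i, (k i <= n)%N.

Lemma wf (e : darc m n) : (base_tail l0 e.1 < n)%N /\ (base_len k e.1 <= n)%N.
Proof.
case: e => [[i|c] d] /=; split.
- exact: ltn_ord.
- exact: hk.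
- exact: ltn_ord.
- by have := ltn_ord c; lia.
Qed.

Lemma winding_eq (g : seq (darc m n)) : is_circuit l0 k g ->
  winding k g = \sum_(e <- g) wr e.
Proof.
move=> /and3P [hne _ hc].
have hn : (0 < n)%N.
  case: g hne {hc} => // -[[i|c] d] _ _.
    by have := ltn_ord (l0 i); lia.
  by have := ltn_ord c; lia.
rewrite /winding.
have -> : \sum_(e <- g) arc_len k e =
   \sum_(e <- g) ((fun z : nat => - (z%:Z)) (arc_tail l0 k e) - (fun z : nat => - (z%:Z)) (arc_head l0 k e))
   + n%:Z * \sum_(e <- g) wr e.
  rewrite mulr_sumr -big_split /=; apply: eq_bigr => e _.
  have [h1 h2] := wf e; rewrite F1 //; ring.
have T0 : \sum_(e <- g) (- (arc_tail l0 k e)%:Z - - (arc_head l0 k e)%:Z) = 0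
  := telesc_cycle (fun z : nat => - (z%:Z)) hc.
rewrite T0 add0r mulKz //; lia.
Qed.

Lemma cross (g : seq (darc m n)) (c : 'I_n) : is_circuit l0 k g ->
  \sum_(e <- g) sj e c = winding k g.
Proof.
move=> hg; rewrite winding_eq //.
move: hg => /and3P [_ _ hc].
have -> : \sum_(e <- g) sj e c = \sum_(e <- g) wr e +
   \sum_(e <- g) ((fun z : nat => ind (z <= c)%N) (arc_tail l0 k e) - (fun z : nat => ind (z <= c)%N) (arc_head l0 k e)).
  rewrite -big_split /=; apply: eq_bigr => e _.
  have [h1 h2] := wf e; rewrite F2 //; ring.
have T0 : \sum_(e <- g) (ind (arc_tail l0 k e <= c)%N - ind (arc_head l0 k e <= c)%N) = 0
  := telesc_cycle (fun z : nat => ind (z <= c)%N) hc.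
by rewrite T0 addr0.
Qed.

End Comb.
Lemma count_ind (T : Type) (P : pred T) (s : seq T) :
  (count P s)%:Z = \sum_(e <- s) ind (P e).
Proof.
elim: s => [|x s IH]; first by rewrite big_nil.
rewrite big_cons /= -IH /ind; case: (P x); lia.
Qed.

Section Int.
Variables (m n : nat) (l0 : 'I_m -> 'I_n) (k : 'I_m -> nat) (b : 'I_m -> int).
Hypothesis hk : forall i, (k i <= n)%N.
Variable g : seq (darc m n).
Hypothesis hg : is_circuit l0 k g.
Hypothesis hp : 0 < winding k g.
Variable z : 'I_n -> int.
Hypothesis hz0 : forall c, 0 <= z c.
Hypothesis hzA : forall i, b i <= \sum_(c < n) (if circ_inc l0 k i c then z c else 0).

Let S (e : darc m n) : int := \sum_(c < n) ind (jumps l0 k e c) * z c.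
Let rb (e : darc m n) : int := match e.1 with inl i => b i | inr _ => 0 end.

Lemma S_ge e : rb e <= S e.
Proof.
case: e => [[i|c'] d]; rewrite /rb /S /=.
  apply: le_trans (hzA i) _; rewrite le_eqVlt; apply/orP; left; apply/eqP.
  apply: eq_bigr => c _; rewrite /ind /jumps /circ_inc /=; case: ifP => _; ring.
apply: sumr_ge0 => c _; apply: mulr_ge0 => //; rewrite /ind; case: ifP => //.
Qed.

Lemma int_main :
  rval k b g * (betav k b g + 1) + rev_row_bsum b g
   <= \sum_(c < n) ((pminus l0 k g c)%:Z + rval k b g) * z c.
Proof.
set p := winding k g.
set t := Defs.tval b g.
set X := \sum_(c < n) z c.
set Pf := \sum_(e <- g | ~~ e.2) S e.
set Pr := \sum_(e <- g | e.2) S e.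
have hb1 : \sum_(e <- g) (if e.2 then - S e else S e) = p * X.
  transitivity (\sum_(e <- g) \sum_(c < n) sj l0 k e c * z c).
    apply: eq_bigr => e _; rewrite /S /sj; case: e.2; last by [].
    rewrite -sumrN; apply: eq_bigr => c _; ring.
  rewrite exchange_big /= /X mulr_sumr; apply: eq_bigr => c _.
  by rewrite -mulr_suml cross.
have hb2 : \sum_(e <- g) (if e.2 then - S e else S e) = Pf - Pr.
  rewrite (bigID (fun e : darc m n => e.2)) /= addrC /Pf /Pr -sumrN.
  congr (_ + _); apply: eq_bigr => e; [by move/negbTE -> | by move ->].
have hc : \sum_(c < n) (pminus l0 k g c)%:Z * z c = Pr.
  transitivity (\sum_(c < n) \sum_(e <- g) ind (e.2 && jumps l0 k e c) * z c).
    by apply: eq_bigr => c _; rewrite /pminus count_ind mulr_suml.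
  rewrite exchange_big /= /Pr [RHS]big_mkcond /=; apply: eq_bigr => e _.
  rewrite /S; case: e.2 => /=; first by [].
  by apply: big1 => c _; rewrite /ind mul0r.
have hd : rev_row_bsum b g = \sum_(e <- g | e.2) rb e by [].
have he : t = \sum_(e <- g | ~~ e.2) rb e - \sum_(e <- g | e.2) rb e.
  rewrite /t /Defs.tval (bigID (fun e : darc m n => e.2)) /= addrC -sumrN.
  congr (_ + _); apply: eq_bigr => -[[i|c] []] //= _; by rewrite ?oppr0.
have h1 : \sum_(e <- g | e.2) rb e <= Pr by apply: ler_sum => e _; apply: S_ge.
have h2 : \sum_(e <- g | ~~ e.2) rb e <= Pf by apply: ler_sum => e _; apply: S_ge.
have hR : \sum_(c < n) ((pminus l0 k g c)%:Z + rval k b g) * z c = Pr + rval k b g * X.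
  rewrite -hc /X mulr_sumr -big_split /=; apply: eq_bigr => c _; ring.
rewrite hR hd.
have hr : rval k b g = (t %% p)%Z.
  by rewrite /rval /betav -/t -/p {1}(divz_eq t p); ring.
have hbe : betav k b g = (t %/ p)%Z by [].
have hdz := divz_eq t p.
have hr0 : 0 <= (t %% p)%Z by apply: modz_ge0; lia.
have hrp : (t %% p)%Z < p by apply: ltz_pmod.
rewrite hr hbe.
move: hdz hr0 hrp h1 h2 he hb1 hb2.
move: (t %/ p)%Z (t %% p)%Z => be r.
move: (\sum_(e <- g | e.2) rb e) (\sum_(e <- g | ~~ e.2) rb e) => RB FB.
move: (\sum_(e <- g) (if e.2 then - S e else S e)) => SS.
move=> hdz hr0 hrp h1 h2 he hb1 hb2.
have [hX|hX] := lerP (be + 1) X.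
  have : 0 <= r * (X - (be + 1)) by apply: mulr_ge0 => //; lia.
  nia.
have : 0 <= (p - r) * (be - X) by apply: mulr_ge0; lia.
nia.
Qed.

End Int.
Unset Implicit Arguments.
Theorem theorem4p5 (R : realType) (m n : nat) (A : 'M[R]_(m, n))
    (l0 : 'I_m -> 'I_n) (k : 'I_m -> nat)
    (hk : forall i, (2 <= k i <= n - 1)%N)
    (hA : forall i j, A i j = (if circ_inc l0 k i j then 1 else 0))
    (b : 'I_m -> int) (hb : forall i, 0 <= b i)
    (g : seq (@darc m n)) (hg : is_circuit l0 k g)
    (hp : 0 < winding k g) :
  forall x : 'I_n -> R, Qstar A b x ->
    ((rval k b g) * (betav k b g + 1) + rev_row_bsum b g)%:~R
      <= \sum_(j < n) ((pminus l0 k g j)%:Z + rval k b g)%:~R * x j.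
Proof.
have hk' : forall i, (k i <= n)%N by move=> i; have := hk i; lia.
move=> x [q [lam [pts [hl0 hl1 hpts hx]]]].
set C := (_ * _ + _)%:~R.
have -> : \sum_(j < n) ((pminus l0 k g j)%:Z + rval k b g)%:~R * x j =
   \sum_(t < q) lam t * \sum_(j < n) ((pminus l0 k g j)%:Z + rval k b g)%:~R * pts t j.
  under eq_bigr => j _ do rewrite hx mulr_sumr.
  rewrite exchange_big /=; apply: eq_bigr => t _; rewrite mulr_sumr.
  by apply: eq_bigr => j _; rewrite mulrCA.
have -> : C = \sum_(t < q) lam t * C by rewrite -mulr_suml hl1 mul1r.
apply: ler_sum => t _; apply: ler_wpM2l => //.
have [[hQA hQ0] [z hz]] := hpts t.
have hz0 : forall c, 0 <= z c by move=> c; have := hQ0 c; rewrite hz ler0z.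
have hzA : forall i, b i <= \sum_(c < n) (if circ_inc l0 k i c then z c else 0).
  move=> i; have := hQA i.
  have -> : \sum_(j < n) A i j * pts t j =
      (\sum_(c < n) (if circ_inc l0 k i c then z c else 0))%:~R.
    rewrite rmorph_sum; apply: eq_bigr => j _; rewrite hA hz.
    by case: ifP => _; rewrite ?mul1r ?mul0r.
  by rewrite ler_int.
have -> : \sum_(j < n) ((pminus l0 k g j)%:Z + rval k b g)%:~R * pts t j =
   (\sum_(j < n) ((pminus l0 k g j)%:Z + rval k b g) * z j)%:~R.
  by rewrite rmorph_sum; apply: eq_bigr => j _; rewrite hz /= intrM.
rewrite /C ler_int.
exact: int_main.
Qed.
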